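(* Let $G$ be a connected graph with no true twins and with $\mathrm{diam}(G)=2$. Then $\mathrm{gp}(G)=\omega(G_{\rm SR})$ if and only if $\mathrm{gp}(G)=\alpha(G)$.
   Context: All graphs are finite and simple. For a connected graph $G$, $d_G(u,v)$ is the distance between $u$ and $v$, and a geodesic is a shortest path. A set $S\subseteq V(G)$ is a general position set if no three pairwise distinct vertices of $S$ lie on a common geodesic of $G$; $\mathrm{gp}(G)$ is the maximum cardinality of a general position set. A vertex $u$ is maximally distant from a vertex $v$ if every neighbor $w$ of $u$ satisfies $d_G(v,w)\le d_G(u,v)$; $u$ and $v$ are mutually maximally distant (MMD) if $u$ is maximally distant from $v$ and $v$ is maximally distant from $u$. The strong resolving graph $G_{\rm SR}$ has vertex set $V(G)$, two distinct vertices being adjacent in $G_{\rm SR}$ iff they are MMD in $G$. $\omega$ denotes the clique number and $\alpha$ the independence number. Vertices $u,v$ are true twins if $N[u]=N[v]$ (closed neighborhoods). *)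

(* Defs.v *)
(* A finite simple graph is a symmetric irreflexive relation
   e on a finType T. *)
From mathcomp Require Import all_boot.
Set Implicit Arguments. Unset Strict Implicit. Unset Printing Implicit Defensive.

Section Graph.
Variables (T : finType) (e : rel T).

Fixpoint within (n : nat) (u : T) : {set T} :=
  match n with
  | 0 => [set u]
  | n'.+1 => within n' u :|: [set y | [exists x in within n' u, e x y]]
  end.

(* d_G(u,v): least n with v within n steps of u (for connected graphs every
   distance is < #|T|). *)
Definition dist (u v : T) : nat := find (fun n => v \in within n u) (iota 0 #|T|).

Definition diam : nat := \max_(u : T) \max_(v : T) dist u v.

(* a geodesic from x to y: a walk x :: p (consecutive vertices adjacent)
   ending in y with exactly d(x,y) edges *)
Definition geodesic (x y : T) (p : seq T) : bool :=
  [&& path e x p, last x p == y & size p == dist x y].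

Definition on_common_geodesic (u v w : T) : bool :=
  [exists x : T, exists y : T, exists p : (dist x y).-tuple T,
     geodesic x y p && [&& u \in x :: p, v \in x :: p & w \in x :: p]].

Definition gp_set (S : {set T}) : bool :=
  [forall u in S, forall v in S, forall w in S,
     [&& u != v, v != w & u != w] ==> ~~ on_common_geodesic u v w].

Definition gp : nat := \max_(S : {set T} | gp_set S) #|S|.

Definition max_dist (u v : T) : bool :=
  [forall w, e u w ==> (dist v w <= dist u v)].

Definition mmd (u v : T) : bool := max_dist u v && max_dist v u.

Definition sr_adj (u v : T) : bool := (u != v) && mmd u v.

Definition clique (r : rel T) (S : {set T}) : bool :=
  [forall u in S, forall v in S, (u != v) ==> r u v].

Definition stable (r : rel T) (S : {set T}) : bool :=
  [forall u in S, forall v in S, ~~ r u v].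

Definition omega_SR : nat := \max_(S : {set T} | clique sr_adj S) #|S|.
Definition alpha : nat := \max_(S : {set T} | stable e S) #|S|.

Definition closed_nbhd (u : T) : {set T} := [set w | (w == u) || e u w].

Definition no_true_twins : Prop :=
  forall u v : T, u != v -> closed_nbhd u != closed_nbhd v.

Definition connected : Prop := forall u v : T, connect e u v.

End Graph.

(* Main.v *)
Require Import Defs.
From mathcomp Require Import all_boot.
Set Implicit Arguments. Unset Strict Implicit.

Section H.
Variables (T : finType) (e : rel T).
Hypotheses (e_sym : symmetric e) (e_irr : irreflexive e).

Lemma within1 u v : (v \in within e 1 u) = (v == u) || e u v.
Proof.
rewrite /= !inE; congr (_ || _); apply/existsP/idP.
  by case=> x /andP[]; rewrite inE => /eqP ->.
by move=> h; exists u; rewrite inE eqxx.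
Qed.

Lemma dist_le u v n : n < #|T| -> v \in within e n u -> dist e u v <= n.
Proof.
move=> hn hv; rewrite /dist leqNgt; apply/negP => hlt.
have := before_find 0 hlt; rewrite nth_iota // add0n => h.
by rewrite h in hv.
Qed.

Lemma dist_in u v : dist e u v < #|T| -> v \in within e (dist e u v) u.
Proof.
move=> h.
have hs : has (fun n => v \in within e n u) (iota 0 #|T|)
  by rewrite has_find size_iota.
have := nth_find 0 hs; rewrite nth_iota //.
Qed.

Lemma card_ge2 (u v : T) : u != v -> 1 < #|T|.
Proof.
move=> nuv; rewrite (cardD1 u) (cardD1 v) !inE eq_sym nuv /=.
by rewrite add1n add1n.
Qed.

Lemma dist_ge2 u v : u != v -> ~~ e u v -> 1 < dist e u v.
Proof.
move=> nuv neuv; have h2 := card_ge2 nuv.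
rewrite ltnNge; apply/negP => h1.
have hin := dist_in (leq_ltn_trans h1 h2).
have : v \in within e 1 u.
  case: (dist e u v) h1 hin => [|[|//]] _ //.
  by rewrite within1 /= inE => ->.
by rewrite within1 eq_sym (negbTE nuv) (negbTE neuv).
Qed.

Lemma dist_le_diam u v : dist e u v <= diam e.
Proof.
apply: leq_trans (leq_bigmax u).
exact: (leq_bigmax (F := fun w => dist e u w) v).
Qed.

Lemma mmd_iff (Gtw : no_true_twins e) (Gdiam : diam e = 2) u v :
  u != v -> mmd e u v = ~~ e u v.
Proof.
move=> nuv; have h2 := card_ge2 nuv.
apply/idP/idP.
  case/andP => /forallP m1 /forallP m2; apply/negP => euv.
  have d1 : forall a b, e a b -> a != b -> dist e a b = 1.
    move=> a b eab nab; apply/eqP; rewrite eqn_leq dist_le ?within1 ?eab ?orbT //.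
    rewrite lt0n; apply/negP => /eqP h0.
    have := dist_in (u:=a) (v:=b); rewrite h0 => /(_ (leq_ltn_trans (leq0n 1) h2)).
    by rewrite /= inE eq_sym (negbTE nab).
  have key : forall a b, e a b -> a != b ->
      (forall w, e a w ==> (dist e b w <= dist e a b)) ->
      {subset closed_nbhd e a <= closed_nbhd e b}.
    move=> a b eab nab hm w; rewrite !inE => /orP[/eqP ->|eaw].
      by rewrite e_sym eab orbT.
    have := implyP (hm w) eaw; rewrite (d1 a b) // => hd.
    have hin := dist_in (leq_ltn_trans hd h2).
    suff : w \in within e 1 b by rewrite within1.
    by move: hd hin; case: (dist e b w) => [|[|//]] _ //; rewrite within1 /= inE => ->.
  have := Gtw u v nuv; rewrite eqEsubset.
  rewrite (introT subsetP (key u v euv nuv m1)).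
  rewrite (introT subsetP (key v u _ _ m2)) //.
    by rewrite e_sym.
  by rewrite eq_sym.
move=> neuv.
have hd : forall a w, dist e a w <= 2 by move=> *; rewrite -Gdiam dist_le_diam.
have g1 := dist_ge2 nuv neuv.
have g2 : 1 < dist e v u by apply: dist_ge2; rewrite 1?eq_sym // e_sym.
by apply/andP; split; apply/forallP => w; apply/implyP => _;
  [exact: leq_trans (hd v w) g1 | exact: leq_trans (hd u w) g2].
Qed.

End H.

Theorem proposition2p4 (T : finType) (e : rel T)
  (e_sym : symmetric e) (e_irr : irreflexive e)
  (Gconn : connected e) (Gtw : no_true_twins e) (Gdiam : diam e = 2) :
  gp e = omega_SR e <-> gp e = alpha e.
Proof.
suff -> : omega_SR e = alpha e by [].
rewrite /omega_SR /alpha; apply: eq_bigl => S.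
apply/forallP/forallP => h u; apply/implyP => uS; apply/forallP => v;
  apply/implyP => vS; have := implyP (forallP (implyP (h u) uS) v) vS.
  case: (eqVneq u v) => [-> _|nuv]; first by rewrite e_irr.
  by rewrite /sr_adj nuv /= mmd_iff.
case: (eqVneq u v) => [//|nuv] /=.
by rewrite /sr_adj nuv /= mmd_iff.
Qed.
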